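(* Let $U$ be a finite set of attributes, $\varphi$ a standard closure operator on $U$, and $X\subseteq U$. Let $\mathrm{WCD}(Y,\Sigma)$ denote the output of the algorithm WildClosureDirect described below on input set $Y\subseteq U$ and implication set $\Sigma$, and let $\Sigma(Z)$ denote the closure of $Z$ with respect to $\Sigma$. (i) If $\Sigma$ is the canonical direct unit basis of $\varphi$, then $\mathrm{WCD}(X,\Sigma)=\Sigma(X)$. (ii) If $\Sigma$ is the D-basis of $\varphi$, then $\mathrm{WCD}(\varphi_0(X),\Sigma)=\Sigma(\varphi_0(X))$.
   Context: An implication over $U$ is a pair $A\to B$ with $A,B\subseteq U$; the closure $\Sigma(Z)$ w.r.t. a set of implications $\Sigma$ is the smallest superset of $Z$ that contains $B$ whenever it contains $A$, for each $A\to B\in\Sigma$. A closure operator $\varphi$ on $U$ is standard if for every $a\in U$ the set $\varphi(a)\setminus\{a\}$ is closed, and $\varphi(a)\neq\varphi(b)$ for $a\neq b$. For $c\in U$, $A\subseteq U$ is a minimal generator of $c$ if $c\in\varphi(A)$, $c\notin A$, and no proper subset $A'\subsetneq A$ has $c\in\varphi(A')$. Canonical direct unit basis: $\{A\to c \mid c\in U,\ A \text{ a minimal generator of } c\}$. D-basis: let $\Sigma_0=\{a\to c\mid a,c\in U,\ c\in\varphi(a)\setminus\{a\}\}$ and $\varphi_0(X)$ the closure of $X$ w.r.t. $\Sigma_0$. A minimal generator $A$ of $c$ with $|A|\ge2$ is a minimal D-generator of $c$ if $c\notin\varphi_0(A)$ and for every minimal generator $A'$ of $c$, $A'\subseteq\varphi_0(A)$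 implies $A'=A$. The D-basis is $\Sigma_0\cup\{A\to c\mid c\in U,\ A\text{ a minimal D-generator of }c\}$. In both bases, implications with equal left-hand side may be merged into a single implication whose right-hand side is the union. Algorithm WildClosureDirect on input $(Y,\Sigma)$: for each $m\in U$ let $list[m]$ be the set of implications $A\to B\in\Sigma$ with $m\in A$. Compute $\Sigma_1:=\bigcup_{m\in U\setminus Y} list[m]$ (this set is fixed once computed). For each $A\to B\in\Sigma\setminus\Sigma_1$, set $Y:=Y\cup B$. Return $Y$. *)

(* Defs.v *)
From mathcomp Require Import all_boot.
Set Implicit Arguments. Unset Strict Implicit. Unset Printing Implicit Defensive.

Section Defs.
Variable U : finType.

Definition imp := ({set U} * {set U})%type.

Definition closure_op (phi : {set U} -> {set U}) : Prop :=
  [/\ forall X : {set U}, X \subset phi X,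
      forall X Y : {set U}, X \subset Y -> phi X \subset phi Y
    & forall X : {set U}, phi (phi X) = phi X].

Definition is_closed (phi : {set U} -> {set U}) (Z : {set U}) : Prop := phi Z = Z.

Definition standard (phi : {set U} -> {set U}) : Prop :=
  (forall a, is_closed phi (phi [set a] :\ a)) /\
  (forall a b, a != b -> phi [set a] != phi [set b]).

Definition respects (Sigma : {set imp}) (Z : {set U}) : bool :=
  [forall i in Sigma, (i.1 \subset Z) ==> (i.2 \subset Z)].

Definition imp_closure (Sigma : {set imp}) (Z : {set U}) : {set U} :=
  \bigcap_(S : {set U} | (Z \subset S) && respects Sigma S) S.

Definition min_gen (phi : {set U} -> {set U}) (c : U) (A : {set U}) : bool :=
  [&& c \in phi A, c \notin A &
      [forall A' : {set U}, (A' \proper A) ==> (c \notin phi A')]].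

Definition cdub (phi : {set U} -> {set U}) : {set imp} :=
  [set i : imp | [exists c, (i.2 == [set c]) && min_gen phi c i.1]].

Definition Sigma0 (phi : {set U} -> {set U}) : {set imp} :=
  [set i : imp | [exists a, exists c,
     [&& i.1 == [set a], i.2 == [set c] & c \in phi [set a] :\ a]]].

Definition phi0 (phi : {set U} -> {set U}) (X : {set U}) : {set U} :=
  imp_closure (Sigma0 phi) X.

Definition min_Dgen (phi : {set U} -> {set U}) (c : U) (A : {set U}) : bool :=
  [&& min_gen phi c A, 2 <= #|A|, c \notin phi0 phi A &
      [forall A' : {set U}, (min_gen phi c A' && (A' \subset phi0 phi A)) ==> (A' == A)]].

Definition dbasis (phi : {set U} -> {set U}) : {set imp} :=
  Sigma0 phi :|:
  [set i : imp | [exists c, (i.2 == [set c]) && min_Dgen phi c i.1]].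

Definition list_of (Sigma : {set imp}) (m : U) : {set imp} :=
  [set i in Sigma | m \in i.1].

Definition WCD (Y : {set U}) (Sigma : {set imp}) : {set U} :=
  let Sigma1 := \bigcup_(m in ~: Y) list_of Sigma m in
  Y :|: \bigcup_(i in Sigma :\: Sigma1) i.2.

End Defs.

(* Main.v *)
Require Import Defs.
From mathcomp Require Import all_boot.
Set Implicit Arguments. Unset Strict Implicit. Unset Printing Implicit Defensive.

Lemma inWCD (U : finType) (Y : {set U}) (S : {set imp U}) x :
  reflect (x \in Y \/ exists2 i, i \in S & (i.1 \subset Y) && (x \in i.2))
          (x \in WCD Y S).
Proof.
rewrite /WCD inE; apply: (iffP orP) => [[->|]|[->|[i iS /andP[sY xi]]]]; auto.
- move/bigcupP=> [i /setDP[iS niS] xi]; right; exists i => //; rewrite xi andbT.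
  apply/subsetP=> m mi; apply/negPn/negP=> mY; move/negP: niS; apply; apply/bigcupP.
  by exists m; rewrite ?inE ?mY // iS mi.
- right; apply/bigcupP; exists i => //; apply/setDP; split=> //.
  apply/negP=> /bigcupP[m]; rewrite !inE => mY /andP[_ mi].
  by move/subsetP: sY => /(_ m mi); rewrite (negbTE mY).
Qed.

Lemma key (U : finType) (phi : {set U} -> {set U}) (S : {set imp U}) (Y : {set U}) :
  closure_op phi ->
  (forall i, i \in S -> i.2 \subset phi i.1) ->
  (forall c, c \in phi Y -> c \notin Y -> exists2 i, i \in S & (i.1 \subset Y) && (c \in i.2)) ->
  WCD Y S = imp_closure S Y.
Proof.
move=> [ext mono idem] sound compl.
have WE : WCD Y S = phi Y.
  apply/eqP; rewrite eqEsubset; apply/andP; split; apply/subsetP=> x.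
  - case/inWCD=> [xY|[i iS /andP[sY xi]]]; first by move/subsetP: (ext Y); apply.
    move/subsetP: (sound i iS) => /(_ x xi); move/subsetP: (mono _ _ sY); apply.
  - move=> xp; apply/inWCD; case: (boolP (x \in Y)) => xY; first by left.
    by right; apply: compl.
have resp : respects S (WCD Y S).
  apply/forall_inP=> i iS; apply/implyP; rewrite WE => sY.
  rewrite -[phi Y]idem; apply: subset_trans (sound i iS) (mono _ _ sY).
have YW : Y \subset WCD Y S by apply/subsetP=> x xY; apply/inWCD; left.
apply/eqP; rewrite eqEsubset; apply/andP; split.
- apply/bigcapsP=> T /andP[YT rT]; apply/subsetP=> x /inWCD[/(subsetP YT)//|[i iS /andP[sY xi]]].
  move/forall_inP: rT => /(_ i iS) /implyP /(_ (subset_trans sY YT)) /subsetP; apply; done.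
- by apply: bigcap_inf; rewrite YW resp.
Qed.

Lemma trans1 (U : finType) (phi : {set U} -> {set U}) a b :
  closure_op phi -> a \in phi [set b] -> phi [set a] \subset phi [set b].
Proof.
move=> [ext mono idem] ab; rewrite -[phi [set b]]idem; apply: mono.
by rewrite sub1set.
Qed.

Lemma self1 (U : finType) (phi : {set U} -> {set U}) a :
  closure_op phi -> a \in phi [set a].
Proof. by move=> [ext _ _]; rewrite -sub1set. Qed.

Lemma phi0E (U : finType) (phi : {set U} -> {set U}) A :
  closure_op phi -> phi0 phi A = \bigcup_(a in A) phi [set a].
Proof.
move=> Hc; apply/eqP; rewrite eqEsubset; apply/andP; split.
- apply: bigcap_inf; apply/andP; split.
    by apply/subsetP=> a aA; apply/bigcupP; exists a => //; apply: self1.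
  rewrite /respects; apply/forall_inP=> i; rewrite inE => /existsP[a /existsP[c /and3P[/eqP-> /eqP-> ca]]].
  apply/implyP; rewrite !sub1set => /bigcupP[b bA ab]; apply/bigcupP; exists b => //.
  move/subsetP: (trans1 Hc ab); apply; by move/setD1P: ca => [].
- apply/bigcapsP=> T /andP[AT rT]; apply/bigcupsP=> a aA; apply/subsetP=> x xa.
  case: (eqVneq x a) => [->|xna]; first by move/subsetP: AT; apply.
  move/forall_inP: rT => /(_ ([set a], [set x])).
  have -> : ([set a], [set x]) \in Sigma0 phi.
    by rewrite inE; apply/existsP; exists a; apply/existsP; exists x; rewrite /= !eqxx /= !inE xna xa.
  move=> /(_ isT) /implyP; rewrite /= !sub1set; apply; exact: (subsetP AT).
Qed.

Lemma antisym (U : finType) (phi : {set U} -> {set U}) a b :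
  closure_op phi -> standard phi -> a \in phi [set b] -> b \in phi [set a] -> a = b.
Proof.
move=> Hc [_ Hs] ab ba; apply/eqP; apply/negPn/negP=> /Hs; apply/negP/negPn.
by rewrite eqEsubset !trans1.
Qed.

Lemma notin_phi0 (U : finType) (phi : {set U} -> {set U}) c :
  closure_op phi -> standard phi -> c \notin phi set0.
Proof.
move=> Hc [Hs _]; apply/negP=> c0.
have Hc' := Hc; case: Hc' => [ext mono idem].
have h1 : phi set0 \subset phi [set c] :\ c.
  rewrite -[phi [set c] :\ c](Hs c); apply: mono; exact: sub0set.
by move/subsetP: h1 => /(_ c c0); rewrite !inE eqxx.
Qed.

Lemma antichain (U : finType) (phi : {set U} -> {set U}) c A x y :
  closure_op phi -> min_gen phi c A -> x \in A -> y \in A -> x \in phi [set y] -> x = y.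
Proof.
move=> [ext mono idem] /and3P[cA _ /forallP mg] xA yA xy.
apply/eqP; apply/negPn/negP=> xny.
move: (mg (A :\ x)); rewrite properD1 //= => /negP; apply.
have : A \subset phi (A :\ x).
  apply/subsetP=> z zA; case: (eqVneq z x) => [->|zx].
    have : [set y] \subset A :\ x by rewrite sub1set !inE eq_sym xny.
    by move/mono/subsetP; apply.
  by move/subsetP: (ext (A :\ x)); apply; rewrite !inE zx.
move/mono; rewrite idem => /subsetP; apply; done.
Qed.

Lemma sub_of_eq (U : finType) (phi : {set U} -> {set U}) c B C :
  closure_op phi -> standard phi -> min_gen phi c C ->
  phi0 phi B = phi0 phi C -> C \subset B.
Proof.
move=> Hc Hs mC E; apply/subsetP=> x xC.
have : x \in phi0 phi B by rewrite E phi0E // ; apply/bigcupP; exists x => //; apply: self1.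
rewrite phi0E // => /bigcupP[b bB xb].
have : b \in phi0 phi C by rewrite -E phi0E //; apply/bigcupP; exists b => //; apply: self1.
rewrite phi0E // => /bigcupP[y yC by_].
have xy : x = y by apply: (antichain Hc mC xC yC); move/subsetP: (trans1 Hc by_); apply.
subst y; by rewrite (antisym Hc Hs xb by_).
Qed.

Lemma mg_exists (U : finType) (phi : {set U} -> {set U}) c Y :
  closure_op phi -> c \in phi Y -> c \notin Y -> exists2 A : {set U}, A \subset Y & min_gen phi c A.
Proof.
move=> Hc cY cnY.
have [A mA AY] := @minset_exists _ (fun A : {set U} => c \in phi A) Y cY.
exists A => //; apply/and3P; split.
- exact: (minsetp mA).
- by apply/negP=> /(subsetP AY); apply/negP.
- apply/forallP=> A'; apply/implyP=> pA; apply/negP=> cA'.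
  have eA := minsetinf mA cA' (proper_sub pA).
  by rewrite eA properE subxx in pA.
Qed.

Lemma dbasis_compl (U : finType) (phi : {set U} -> {set U}) (X : {set U}) c :
  closure_op phi -> standard phi ->
  c \in phi (phi0 phi X) -> c \notin phi0 phi X ->
  exists2 i, i \in dbasis phi & (i.1 \subset phi0 phi X) && (c \in i.2).
Proof.
move=> Hc Hs cY cnY; set Y := phi0 phi X in cY cnY *.
have dc : forall a d, a \in Y -> d \in phi [set a] -> d \in Y.
  move=> a d; rewrite /Y phi0E // => /bigcupP[x xX ax] da.
  apply/bigcupP; exists x => //; move/subsetP: (trans1 Hc ax); apply; done.
have sub0 : forall A : {set U}, A \subset Y -> phi0 phi A \subset Y.
  move=> A AY; rewrite phi0E //; apply/bigcupsP=> a aA; apply/subsetP=> d.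
  by apply: dc; apply: (subsetP AY).
have [A0 A0Y mA0] := mg_exists Hc cY cnY.
pose P := fun A : {set U} => min_gen phi c A && (A \subset Y).
have PA0 : P A0 by rewrite /P mA0 A0Y.
case: (arg_minnP (fun A => #|phi0 phi A|) PA0) => A /andP[mA AY] Amin.
exists (A, [set c]); last by rewrite /= AY set11.
rewrite /dbasis inE; apply/orP; right; rewrite inE; apply/existsP; exists c.
rewrite eqxx /=; apply/and4P; split => //.
- rewrite ltnNge; apply/negP=> A1.
  have := A1; rewrite leq_eqVlt ltnS leqn0 => /orP[/cards1P[a Ae]|/eqP/cards0_eq Ae].
  + move/and3P: mA => [cA _ _]; move: cA; rewrite Ae => ca.
    have aY : a \in Y by apply: (subsetP AY); rewrite Ae set11.
    by move/negP: cnY; apply; apply: (dc a).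
  + move/and3P: mA => [cA _ _]; move: cA; rewrite Ae => c0.
    by move/negP: (notin_phi0 c Hc Hs); apply.
- apply/negP=> /(subsetP (sub0 A AY)); exact/negP.
- apply/forallP=> A'; apply/implyP=> /andP[mA' A'A].
  have A'Y : A' \subset Y by apply: subset_trans A'A (sub0 A AY).
  have le1 := Amin A' (introT andP (conj mA' A'Y)).
  have s : phi0 phi A' \subset phi0 phi A.
    rewrite [phi0 phi A']phi0E //; apply/bigcupsP=> a aA'.
    move/subsetP: A'A => /(_ a aA'); rewrite phi0E // => /bigcupP[b bA ab].
    apply: subset_trans (trans1 Hc ab) _; exact: (bigcup_sup b bA).
  have E : phi0 phi A = phi0 phi A'.
    apply/eqP; rewrite eq_sym eqEcard s; exact: le1.
  apply/eqP; apply/eqP; rewrite eqEsubset (sub_of_eq Hc Hs mA' E).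
  by rewrite (sub_of_eq Hc Hs mA (esym E)).
Qed.

Theorem proposition3 (U : finType) (phi : {set U} -> {set U}) (X : {set U}) :
  closure_op phi -> standard phi ->
  WCD X (cdub phi) = imp_closure (cdub phi) X /\
  WCD (phi0 phi X) (dbasis phi) = imp_closure (dbasis phi) (phi0 phi X).
Proof.
move=> Hc Hs; split; apply: (key Hc).
- move=> i; rewrite inE => /existsP[c /andP[/eqP-> /and3P[ci _ _]]].
  by rewrite sub1set.
- move=> c cX cnX; have [A AX mA] := mg_exists Hc cX cnX.
  exists (A, [set c]); last by rewrite /= AX set11.
  by rewrite inE; apply/existsP; exists c; rewrite eqxx.
- move=> i; rewrite /dbasis !inE => /orP[].
    move=> /existsP[a /existsP[c /and3P[/eqP-> /eqP-> ca]]].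
    by rewrite sub1set; move/setD1P: ca => [].
  move=> /existsP[c /andP[/eqP-> /and4P[/and3P[ci _ _] _ _ _]]].
  by rewrite sub1set.
- by move=> c; apply: dbasis_compl.
Qed.
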